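(* Let $G$ be a finite group and $(\Gamma,\rho)$ a voltage graph. Then $(\Gamma,\rho)$ is structurally balanced if and only if $f(c)=\mathbf 1$ for every semi-cycle $c$ of $\Gamma$.
   Context: $\Gamma=(V,E)$ is a simple digraph, $e_{ij}$ the edge $v_i\to v_j$, $\rho:E\to G$, $\mathbf 1$ the identity of $G$. A semi-walk is $w=v_{i_1}a_1\dots a_{n-1}v_{i_n}$ with each $a_j\in\{e_{i_ji_{j+1}},e_{i_{j+1}i_j}\}$; closed if $v_{i_1}=v_{i_n}$; a semi-cycle is a closed semi-walk with no repeated vertices other than the starting vertex equal to the ending vertex (a single vertex is a trivial semi-cycle). Net voltage $f(w)=\bar\rho(a_1)\cdots\bar\rho(a_{n-1})$, $\bar\rho(a_j)=\rho(a_j)$ if $a_j=e_{i_ji_{j+1}}$ and $\rho(a_j)^{-1}$ otherwise; $f=\mathbf 1$ on a single vertex. $(\Gamma,\rho)$ is structurally balanced if $f(w)=\mathbf 1$ for every closed semi-walk $w$. *)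

(* Defs.v *)
From mathcomp Require Import all_boot all_fingroup.
Set Implicit Arguments. Unset Strict Implicit. Unset Printing Implicit Defensive.
Local Open Scope group_scope.

(* A simple digraph: finite vertex type V with an irreflexive edge relation
   [e]; [e x y] means the edge e_{xy} : x -> y exists.  A voltage assignment is
   [rho : V -> V -> gT], only its values on edges are relevant. *)
Definition simple_digraph (V : finType) (e : rel V) : Prop := irreflexive e.

(* A semi-walk v_{i_1} a_1 ... v_{i_n} is represented by its start vertex x and
   a list of steps (y, b): move to y along a_j, where b = true means
   a_j = e_{xy} (forward edge) and b = false means a_j = e_{yx} (backward). *)
Definition step_ok (V : finType) (e : rel V) (x : V) (s : V * bool) : bool :=
  if s.2 then e x s.1 else e s.1 x.

Fixpoint semiwalk (V : finType) (e : rel V) (x : V) (p : seq (V * bool)) : bool :=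
  match p with
  | [::] => true
  | s :: p' => step_ok e x s && semiwalk e s.1 p'
  end.

Definition closed_semiwalk (V : finType) (e : rel V) (x : V) (p : seq (V * bool)) : bool :=
  semiwalk e x p && (last x (map fst p) == x).

(* The vertex list is x :: map fst p with last element x, so this means the
   vertices v_{i_2},...,v_{i_n} are pairwise distinct.  p = [::] is the
   trivial semi-cycle. *)
Definition semicycle (V : finType) (e : rel V) (x : V) (p : seq (V * bool)) : bool :=
  closed_semiwalk e x p && uniq (map fst p).

Fixpoint net_voltage (V : finType) (gT : finGroupType) (rho : V -> V -> gT)
    (x : V) (p : seq (V * bool)) : gT :=
  match p with
  | [::] => 1
  | s :: p' => (if s.2 then rho x s.1 else (rho s.1 x)^-1) * net_voltage rho s.1 p'
  end.

Definition structurally_balanced (V : finType) (gT : finGroupType) (e : rel V)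
    (rho : V -> V -> gT) : Prop :=
  forall x p, closed_semiwalk e x p -> net_voltage rho x p = 1.

(* Main.v *)
Require Import Defs.
From mathcomp Require Import all_boot all_fingroup.
From mathcomp Require Import zify.
Set Implicit Arguments. Unset Strict Implicit.

Section H.
Variables (gT : finGroupType) (V : finType) (e : rel V) (rho : V -> V -> gT).

Lemma nv_cat x (p q : seq (V * bool)) : net_voltage rho x (p ++ q) =
  (net_voltage rho x p * net_voltage rho (last x (map fst p)) q)%g.
Proof.
elim: p x => [|s p IH] x /=; first by rewrite mul1g.
by rewrite IH mulgA.
Qed.

Lemma sw_cat x (p q : seq (V * bool)) : semiwalk e x (p ++ q) =
  semiwalk e x p && semiwalk e (last x (map fst p)) q.
Proof. by elim: p x => [|s p IH] x //=; rewrite IH andbA. Qed.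

Lemma split_mem (y z : V) (s : seq (V * bool)) : y \in map fst s ->
  exists s1 s2, s = s1 ++ s2 /\ s1 != [::] /\ last z (map fst s1) = y.
Proof.
elim: s z => [|t s IH] z //=; rewrite in_cons => /orP[/eqP ->|/IH].
  by exists [:: t], s.
move=> /(_ z) [s1 [s2 [-> [Hn Hl]]]]; exists (t :: s1), s2; split => //.
by split => //; case: s1 Hn Hl.
Qed.

Lemma split_dup (x : V) (p : seq (V * bool)) : ~~ uniq (map fst p) ->
  exists p1 p2 p3, p = p1 ++ p2 ++ p3 /\ p1 != [::] /\ p2 != [::] /\
    last (last x (map fst p1)) (map fst p2) = last x (map fst p1).
Proof.
elim: p x => [|q p IH] x //=; rewrite negb_and negbK => /orP[Hin|/IH Hd].
  have [r1 [r2 [-> [Hn Hl]]]] := @split_mem q.1 q.1 _ Hin.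
  by exists [:: q], r1, r2.
have [p1 [p2 [p3 [-> [_ [Hn Hl]]]]]] := Hd q.1.
by exists (q :: p1), p2, p3.
Qed.

End H.

Theorem lemma2 (gT : finGroupType) (V : finType) (e : rel V)
    (rho : V -> V -> gT) (He : simple_digraph e) :
  structurally_balanced e rho <->
  (forall (x : V) (p : seq (V * bool)), semicycle e x p ->
     net_voltage rho x p = 1%g).
Proof.
split.
  by move=> Hb x p /andP[Hc _]; apply: Hb.
move=> Hs x p.
move: {2}(size p) (leqnn (size p)) => n; elim: n x p => [|n IH] x p.
  by rewrite leqn0 => /nilP -> _.
move=> Hsz Hc.
case Hu: (uniq (map fst p)); first by apply: Hs; rewrite /semicycle Hc Hu.
have [p1 [p2 [p3 [Ep [Hn1 [Hn Hl]]]]]] := split_dup x (negbT Hu).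
move: Hc; rewrite /closed_semiwalk Ep !sw_cat !map_cat !last_cat Hl.
case/andP=> /and3P[H1 H2 H3] Hlast.
rewrite !nv_cat Hl.
have -> : net_voltage rho (last x (map fst p1)) p2 = 1%g.
  apply: IH.
    move: Hsz; rewrite Ep !size_cat; have: size p2 > 0 by case: (p2) Hn.
    have: size p1 > 0 by case: (p1) Hn1. move=> A B C; lia.
  by rewrite /closed_semiwalk H2 Hl eqxx.
rewrite mul1g -nv_cat; apply: IH.
  move: Hsz; rewrite Ep !size_cat; have: size p2 > 0 by case: (p2) Hn.
    have: size p1 > 0 by case: (p1) Hn1. move=> A B C; lia.
by rewrite /closed_semiwalk sw_cat H1 H3 map_cat last_cat.
Qed.
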